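(* Let $I\subseteq\mathbb{R}$ be an interval, $X\subseteq I$, $q,r\ge0$, and let $f:X\to\mathbb{R}$ be strictly increasing or strictly decreasing. If every bounded gap of $X$ has length less than $q$ and every bounded gap of $f(X)$ has length less than $r$, then $f$ is $r$-continuous on $X$.
   Context: A gap of a set $X\subseteq\mathbb{R}$ is a nonempty interval $J\subseteq\mathbb{R}$ containing no point of $X$ such that no interval strictly containing $J$ has this property; its length is $\sup J-\inf J$. For $D\subseteq\mathbb{R}$, $f:D\to\mathbb{R}$ and $r\ge 0$: $f$ is $r$-continuous at $a\in D$ if for every $\varepsilon>0$ there is $\delta>0$ such that for all $x\in D$ with $|x-a|<\delta$ one has $|f(x)-f(a)|<r+\varepsilon$; $f$ is $r$-continuous on $D$ if it is $r$-continuous at every point of $D$. *)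

(* Defs.v *)
From Stdlib Require Import Reals Lra.
Open Scope R_scope.

Definition is_interval (J : R -> Prop) : Prop :=
  forall x y z, J x -> J z -> x <= y -> y <= z -> J y.

Definition is_gap (X J : R -> Prop) : Prop :=
  (exists x, J x) /\ is_interval J /\ (forall x, J x -> ~ X x) /\
  (forall J' : R -> Prop,
     is_interval J' -> (forall x, J x -> J' x) -> (exists x, J' x /\ ~ J x) ->
     ~ (forall x, J' x -> ~ X x)).

Definition is_glb (E : R -> Prop) (m : R) : Prop :=
  (forall x, E x -> m <= x) /\ (forall m', (forall x, E x -> m' <= x) -> m' <= m).

Definition bounded_set (E : R -> Prop) : Prop :=
  (exists M, forall x, E x -> x <= M) /\ (exists m, forall x, E x -> m <= x).

Definition length_lt (J : R -> Prop) (q : R) : Prop :=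
  exists a b, is_glb J a /\ is_lub J b /\ b - a < q.

Definition image (f : R -> R) (X : R -> Prop) : R -> Prop :=
  fun y => exists x, X x /\ f x = y.

Definition strictly_increasing_on (X : R -> Prop) (f : R -> R) : Prop :=
  forall x y, X x -> X y -> x < y -> f x < f y.

Definition strictly_decreasing_on (X : R -> Prop) (f : R -> R) : Prop :=
  forall x y, X x -> X y -> x < y -> f y < f x.

Definition r_continuous_at (D : R -> Prop) (f : R -> R) (r a : R) : Prop :=
  forall eps, 0 < eps -> exists delta, 0 < delta /\
    forall x, D x -> Rabs (x - a) < delta -> Rabs (f x - f a) < r + eps.

Definition r_continuous_on (D : R -> Prop) (f : R -> R) (r : R) : Prop :=
  forall a, D a -> r_continuous_at D f r a.

(* Main.v *)
Require Import Defs.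
From Stdlib Require Import Reals Lra Classical.
Open Scope R_scope.

Lemma gapA (Y : R -> Prop) (c r eps : R) :
  Y c -> 0 <= r -> 0 < eps ->
  (forall J, is_gap Y J -> bounded_set J -> length_lt J r) ->
  (forall z, Y z -> c < z -> c + r + eps <= z) ->
  forall z, Y z -> ~ c < z.
Proof.
  intros Yc Hr He Hgap Hbig z0 Yz0 hz0.
  set (G := fun y => c < y /\ ~ Y y /\ forall z, Y z -> c < z -> y <= z).
  assert (HG : forall y, c < y < c + r + eps -> G y).
  { intros y [h1 h2]. split; [lra|split].
    - intro Yy. specialize (Hbig y Yy h1). lra.
    - intros z Yz hz. specialize (Hbig z Yz hz). lra. }
  assert (Hg : G (c + eps/2)) by (apply HG; lra).
  destruct (Hgap G) as [m [b [[Hm _] [[Hb _] Hl]]]].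
  - split; [exists (c+eps/2); exact Hg|split; [|split]].
    + intros x y z [x1 [x2 x3]] [z1 [z2 z3]] hxy hyz. split; [lra|split].
      * intro Yy. assert (z <= y) by (apply z3; [exact Yy|lra]).
        assert (y = z) by lra. subst y. contradiction.
      * intros z' Yz' hz'. specialize (z3 z' Yz' hz'). lra.
    + intros x [_ [h _]]. exact h.
    + intros J' HJ' Hsub [w [Jw nGw]] Hno.
      assert (Jg : J' (c + eps/2)) by (apply Hsub; exact Hg).
      destruct (Rle_lt_dec w c) as [hw|hw].
      * apply (Hno c); [apply (HJ' w c (c+eps/2)); auto; lra | exact Yc].
      * destruct (classic (exists z, Y z /\ c < z /\ z < w)) as [[z [Yz [cz zw]]]|Hn].
        -- destruct Hg as [_ [_ g3]]. specialize (g3 z Yz cz).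
           apply (Hno z); [apply (HJ' (c+eps/2) z w); auto; lra | exact Yz].
        -- apply nGw. split; [exact hw|split].
           ++ intro Yw. exact (Hno w Jw Yw).
           ++ intros z Yz cz. destruct (Rle_lt_dec w z); [assumption|].
              exfalso. apply Hn. exists z. auto.
  - split.
    + exists z0. intros x [_ [_ h]]. apply h; auto.
    + exists c. intros x [h _]. lra.
  - assert (g1 : G (c + eps/4)) by (apply HG; lra).
    assert (g2 : G (c + r + eps/2)) by (apply HG; lra).
    assert (h1 := Hm _ g1). assert (h2 := Hb _ g2). lra.
Qed.

Lemma gapB (Y : R -> Prop) (c r eps : R) :
  Y c -> 0 <= r -> 0 < eps ->
  (forall J, is_gap Y J -> bounded_set J -> length_lt J r) ->
  (forall z, Y z -> z < c -> z <= c - r - eps) ->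
  forall z, Y z -> ~ z < c.
Proof.
  intros Yc Hr He Hgap Hbig z0 Yz0 hz0.
  set (G := fun y => y < c /\ ~ Y y /\ forall z, Y z -> z < c -> z <= y).
  assert (HG : forall y, c - r - eps < y < c -> G y).
  { intros y [h1 h2]. split; [lra|split].
    - intro Yy. specialize (Hbig y Yy h2). lra.
    - intros z Yz hz. specialize (Hbig z Yz hz). lra. }
  assert (Hg : G (c - eps/2)) by (apply HG; lra).
  destruct (Hgap G) as [m [b [[Hm _] [[Hb _] Hl]]]].
  - split; [exists (c-eps/2); exact Hg|split; [|split]].
    + intros x y z [x1 [x2 x3]] [z1 [z2 z3]] hxy hyz. split; [lra|split].
      * intro Yy. assert (y <= x) by (apply x3; [exact Yy|lra]).
        assert (y = x) by lra. subst y. contradiction.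
      * intros z' Yz' hz'. specialize (x3 z' Yz' hz'). lra.
    + intros x [_ [h _]]. exact h.
    + intros J' HJ' Hsub [w [Jw nGw]] Hno.
      assert (Jg : J' (c - eps/2)) by (apply Hsub; exact Hg).
      destruct (Rle_lt_dec c w) as [hw|hw].
      * apply (Hno c); [apply (HJ' (c-eps/2) c w); auto; lra | exact Yc].
      * destruct (classic (exists z, Y z /\ z < c /\ w < z)) as [[z [Yz [cz zw]]]|Hn].
        -- destruct Hg as [_ [_ g3]]. specialize (g3 z Yz cz).
           apply (Hno z); [apply (HJ' w z (c-eps/2)); auto; lra | exact Yz].
        -- apply nGw. split; [exact hw|split].
           ++ intro Yw. exact (Hno w Jw Yw).
           ++ intros z Yz cz. destruct (Rle_lt_dec z w); [assumption|].
              exfalso. apply Hn. exists z. auto.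
  - split.
    + exists c. intros x [h _]. lra.
    + exists z0. intros x [_ [_ h]]. apply h; auto.
  - assert (g1 : G (c - r - eps/2)) by (apply HG; lra).
    assert (g2 : G (c - eps/4)) by (apply HG; lra).
    assert (h1 := Hm _ g1). assert (h2 := Hb _ g2). lra.
Qed.

Lemma combine (X : R -> Prop) (f : R -> R) (r eps a : R) :
  0 <= r -> 0 < eps ->
  ((exists x0, X x0 /\ a < x0 /\ forall x, X x -> a < x < x0 -> Rabs (f x - f a) < r + eps)
    \/ (forall x, X x -> ~ a < x)) ->
  ((exists x0, X x0 /\ x0 < a /\ forall x, X x -> x0 < x < a -> Rabs (f x - f a) < r + eps)
    \/ (forall x, X x -> ~ x < a)) ->
  exists delta, 0 < delta /\
    forall x, X x -> Rabs (x - a) < delta -> Rabs (f x - f a) < r + eps.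
Proof.
  intros Hr He HR HL.
  assert (HRd : exists d, 0 < d /\ forall x, X x -> a < x < a + d -> Rabs (f x - f a) < r + eps).
  { destruct HR as [[x0 [_ [h1 h2]]]|h].
    - exists (x0 - a). split; [lra|]. intros x Xx hx. apply h2; auto; lra.
    - exists 1. split; [lra|]. intros x Xx hx. exfalso. apply (h x Xx). lra. }
  assert (HLd : exists d, 0 < d /\ forall x, X x -> a - d < x < a -> Rabs (f x - f a) < r + eps).
  { destruct HL as [[x0 [_ [h1 h2]]]|h].
    - exists (a - x0). split; [lra|]. intros x Xx hx. apply h2; auto; lra.
    - exists 1. split; [lra|]. intros x Xx hx. exfalso. apply (h x Xx). lra. }
  destruct HRd as [d [hd Hd]]. destruct HLd as [e [he He']].
  exists (Rmin d e). split; [apply Rmin_pos; auto|].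
  intros x Xx hx.
  assert (hm1 := Rmin_l d e). assert (hm2 := Rmin_r d e).
  apply Rabs_def2 in hx. destruct hx as [hx1 hx2].
  destruct (Rtotal_order x a) as [h|[h|h]].
  - apply He'; auto; lra.
  - subst x. unfold Rminus. rewrite Rplus_opp_r, Rabs_R0. lra.
  - apply Hd; auto; lra.
Qed.

Theorem theorem8 (I X : R -> Prop) (q r : R) (f : R -> R) :
  is_interval I ->
  (forall x, X x -> I x) ->
  0 <= q -> 0 <= r ->
  (strictly_increasing_on X f \/ strictly_decreasing_on X f) ->
  (forall J, is_gap X J -> bounded_set J -> length_lt J q) ->
  (forall J, is_gap (image f X) J -> bounded_set J -> length_lt J r) ->
  r_continuous_on X f r.
Proof.
  intros _ _ _ Hr Hmon _ Hgap a Xa eps He.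
  assert (Ya : image f X (f a)) by (exists a; auto).
  apply combine; auto.
  - destruct (classic (exists x0, X x0 /\ a < x0 /\ Rabs (f x0 - f a) < r + eps))
      as [[x0 [X0 [h1 h2]]]|Hn].
    + left. exists x0. split; [auto|split; [auto|]].
      intros x Xx hx. destruct Hmon as [Hi|Hd].
      * assert (f a < f x) by (apply Hi; auto; lra).
        assert (f x < f x0) by (apply Hi; auto; lra).
        assert (f a < f x0) by (apply Hi; auto; lra).
        rewrite Rabs_right in h2 |- *; lra.
      * assert (f x < f a) by (apply Hd; auto; lra).
        assert (f x0 < f x) by (apply Hd; auto; lra).
        assert (f x0 < f a) by (apply Hd; auto; lra).
        rewrite Rabs_left in h2 |- *; lra.
    + right. intros x Xx hx. destruct Hmon as [Hi|Hd].
      * apply (gapA (image f X) (f a) r eps Ya Hr He Hgap) with (z := f x).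
        -- intros z [y [Xy <-]] hz.
           destruct (Rlt_le_dec a y) as [hy|hy].
           ++ destruct (Rle_lt_dec (f a + r + eps) (f y)); auto.
              exfalso. apply Hn. exists y. split; auto. split; auto.
              rewrite Rabs_right; lra.
           ++ exfalso. destruct (Rle_lt_or_eq_dec _ _ hy) as [h|h].
              ** assert (f y < f a) by (apply Hi; auto). lra.
              ** subst y. lra.
        -- exists x; auto.
        -- apply Hi; auto.
      * apply (gapB (image f X) (f a) r eps Ya Hr He Hgap) with (z := f x).
        -- intros z [y [Xy <-]] hz.
           destruct (Rlt_le_dec a y) as [hy|hy].
           ++ destruct (Rle_lt_dec (f y) (f a - r - eps)); auto.
              exfalso. apply Hn. exists y. split; auto. split; auto.
              rewrite Rabs_left; lra.
           ++ exfalso. destruct (Rle_lt_or_eq_dec _ _ hy) as [h|h].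
              ** assert (f a < f y) by (apply Hd; auto). lra.
              ** subst y. lra.
        -- exists x; auto.
        -- apply Hd; auto.
  - destruct (classic (exists x0, X x0 /\ x0 < a /\ Rabs (f x0 - f a) < r + eps))
      as [[x0 [X0 [h1 h2]]]|Hn].
    + left. exists x0. split; [auto|split; [auto|]].
      intros x Xx hx. destruct Hmon as [Hi|Hd].
      * assert (f x < f a) by (apply Hi; auto; lra).
        assert (f x0 < f x) by (apply Hi; auto; lra).
        assert (f x0 < f a) by (apply Hi; auto; lra).
        rewrite Rabs_left in h2 |- *; lra.
      * assert (f a < f x) by (apply Hd; auto; lra).
        assert (f x < f x0) by (apply Hd; auto; lra).
        assert (f a < f x0) by (apply Hd; auto; lra).
        rewrite Rabs_right in h2 |- *; lra.
    + right. intros x Xx hx. destruct Hmon as [Hi|Hd].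
      * apply (gapB (image f X) (f a) r eps Ya Hr He Hgap) with (z := f x).
        -- intros z [y [Xy <-]] hz.
           destruct (Rlt_le_dec y a) as [hy|hy].
           ++ destruct (Rle_lt_dec (f y) (f a - r - eps)); auto.
              exfalso. apply Hn. exists y. split; auto. split; auto.
              rewrite Rabs_left; lra.
           ++ exfalso. destruct (Rle_lt_or_eq_dec _ _ hy) as [h|h].
              ** assert (f a < f y) by (apply Hi; auto). lra.
              ** subst y. lra.
        -- exists x; auto.
        -- apply Hi; auto.
      * apply (gapA (image f X) (f a) r eps Ya Hr He Hgap) with (z := f x).
        -- intros z [y [Xy <-]] hz.
           destruct (Rlt_le_dec y a) as [hy|hy].
           ++ destruct (Rle_lt_dec (f a + r + eps) (f y)); auto.
              exfalso. apply Hn. exists y. split; auto. split; auto.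
              rewrite Rabs_right; lra.
           ++ exfalso. destruct (Rle_lt_or_eq_dec _ _ hy) as [h|h].
              ** assert (f y < f a) by (apply Hd; auto). lra.
              ** subst y. lra.
        -- exists x; auto.
        -- apply Hd; auto.
Qed.
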